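(* Let $\iota:B\to A$ be a central homomorphism of monoids, i.e. $B$ is commutative and $\iota(b)a=a\iota(b)$ for all $a\in A$, $b\in B$. Then: (1) a map $q:A\to B$ satisfies (ZL1), (ZL2), (ZL3) if and only if $q$ is a monoid homomorphism with $q\circ\iota=\mathrm{id}_B$; (2) any two such maps $q,q'$ that are equivalent (i.e. there is an invertible $b_0\in B$ with $q(a)b_0=q'(a\,\iota(b_0))$ for all $a\in A$) are equal; hence the canonical surjection $\mathcal Z^1(\mathsf T^l_\iota,(B,m_B))\to\mathsf{Desc}^1(\mathsf T^l_\iota,(B,m_B))$ is a bijection.
   Context: Let $\iota:B\to A$ be a monoid homomorphism. $\mathcal Z^1(\mathsf T^l_\iota,(B,m_B))$ is identified with the set of maps $q:A\to B$ satisfying (ZL1) $q(1_A)=1_B$; (ZL2) $q(\iota(b)a)=b\,q(a)$ for all $a\in A,b\in B$; (ZL3) $q(aa')=q(a\,\iota(q(a')))$ for all $a,a'\in A$. (These are exactly the Eilenberg–Moore algebra structures on the left $B$-set $B$ for the monad $A\otimes_B-$ on left $B$-sets induced by $\iota$, via $h\mapsto(a\mapsto h(a\otimes 1_B))$.) Two elements $q,q'$ are equivalent if there is an invertible $b_0\in B$ with $q(a)b_0=q'(a\,\iota(b_0))$ for all $a\in A$ (equivalently, the corresponding algebras are isomorphic); $\mathsf{Desc}^1(\mathsf T^l_\iota,(B,m_B))$ is the set of equivalence classes. *)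

(* Defs.v *)
Record monoid_laws {M : Type} (mul : M -> M -> M) (one : M) : Prop := {
  ml_assoc : forall x y z, mul x (mul y z) = mul (mul x y) z;
  ml_mul1 : forall x, mul one x = x;
  ml_mul1r : forall x, mul x one = x
}.

Definition monoid_hom {M N : Type} (mulM : M -> M -> M) (oneM : M)
  (mulN : N -> N -> N) (oneN : N) (f : M -> N) : Prop :=
  f oneM = oneN /\ forall x y, f (mulM x y) = mulN (f x) (f y).

Definition invertible {M : Type} (mul : M -> M -> M) (one : M) (b : M) : Prop :=
  exists c, mul b c = one /\ mul c b = one.

(* The set Z^1(T^l_iota, (B, m_B)): maps q : A -> B with (ZL1), (ZL2), (ZL3). *)
Definition ZL {A B : Type} (mulA : A -> A -> A) (oneA : A)
  (mulB : B -> B -> B) (oneB : B) (iota : B -> A) (q : A -> B) : Prop :=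
  q oneA = oneB /\
  (forall a b, q (mulA (iota b) a) = mulB b (q a)) /\
  (forall a a', q (mulA a a') = q (mulA a (iota (q a')))).

Definition ZL_equiv {A B : Type} (mulA : A -> A -> A)
  (mulB : B -> B -> B) (oneB : B) (iota : B -> A) (q q' : A -> B) : Prop :=
  exists b0, invertible mulB oneB b0 /\
    forall a, mulB (q a) b0 = q' (mulA a (iota b0)).

(* Main.v *)
Require Import Defs.
From Stdlib Require Import FunctionalExtensionality.

Theorem proposition3p9 (A B : Type)
  (mulA : A -> A -> A) (oneA : A) (mulB : B -> B -> B) (oneB : B)
  (HA : monoid_laws mulA oneA) (HB : monoid_laws mulB oneB)
  (iota : B -> A) (Hiota : monoid_hom mulB oneB mulA oneA iota)
  (HBcomm : forall b b' : B, mulB b b' = mulB b' b)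
  (Hcentral : forall (a : A) (b : B), mulA (iota b) a = mulA a (iota b)) :
  (forall q : A -> B,
     ZL mulA oneA mulB oneB iota q <->
     (monoid_hom mulA oneA mulB oneB q /\ forall b : B, q (iota b) = b)) /\
  (forall q q' : A -> B,
     ZL mulA oneA mulB oneB iota q -> ZL mulA oneA mulB oneB iota q' ->
     ZL_equiv mulA mulB oneB iota q q' -> q = q').
Proof.
  destruct HA as [Aa A1 A1r]. destruct HB as [Ba B1 B1r].
  destruct Hiota as [i1 iM].
  assert (P1 : forall q : A -> B,
     ZL mulA oneA mulB oneB iota q ->
     (monoid_hom mulA oneA mulB oneB q /\ forall b : B, q (iota b) = b)).
  { intros q [Z1 [Z2 Z3]].
    assert (Hi : forall b, q (iota b) = b).
    { intro b. rewrite <- (A1r (iota b)), Z2, Z1, B1r. reflexivity. }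
    split; [split|]; auto.
    intros x y. rewrite Z3, <- Hcentral, Z2, HBcomm. reflexivity. }
  split.
  - intro q. split; [apply P1|].
    intros [[h1 hM] hi]. split; [exact h1|]. split.
    + intros a b. rewrite hM, hi. reflexivity.
    + intros a a'. rewrite !hM, hi. reflexivity.
  - intros q q' Zq Zq' [b0 [[c [Hc1 Hc2]] E]].
    destruct (P1 q' Zq') as [[_ hM] hi].
    apply functional_extensionality; intro a.
    assert (H := E a). rewrite hM, hi in H.
    rewrite <- (B1r (q a)), <- Hc1, Ba, H, <- Ba, Hc1, B1r. reflexivity.
Qed.
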